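(* An $\mathrm{FI}_G$-module $V$ is projective if and only if $V\cong\bigoplus_{i\ge0}M(W_i)$ where each $W_i$ is a projective $k[G_i]$-module. In particular, every projective $\mathrm{FI}_G$-module is relatively projective.
   Context: Fix a commutative ring $k$ and a group $G$. $\mathrm{FI}_G$ is the category with objects $[n]$ ($n\ge0$) and morphisms $[n]\to[m]$ the pairs $(f,g)$ with $f$ injective and $g:[n]\to G$ a map of sets; composition $(f,g)\circ(f',g')=(f\circ f',h)$, $h(x)=g'(x)\,g(f'(x))$. $G_n=\mathfrak S_n\wr G=\mathrm{Aut}_{\mathrm{FI}_G}([n])$. An $\mathrm{FI}_G$-module is a functor $V:\mathrm{FI}_G\to\mathrm{Mod}_k$ (projectivity is in the abelian category of all $\mathrm{FI}_G$-modules). For a $k[G_n]$-module $W$, $M(W)$ is the $\mathrm{FI}_G$-module with $M(W)_m=W\otimes_{k[G_n]}k[\mathrm{Hom}_{\mathrm{FI}_G}([n],[m])]$, morphisms acting by postcomposition on the second factor; modules of the form $\bigoplus_n M(W_n)$ are called relatively projective. *)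

(* Defs.v *)
From HB Require Import structures.
From mathcomp Require Import all_boot all_algebra.



Unset Printing Implicit Defensive.

Import GRing.Theory.
Local Open Scope ring_scope.

Record FIGhom (G : groupType) (n m : nat) := FIGHom {
  fig_f : {ffun 'I_n -> 'I_m};
  fig_inj : injectiveb fig_f;
  fig_g : {ffun 'I_n -> G}
}.
Arguments FIGHom {G n m}.
Arguments fig_f {G n m}.
Arguments fig_inj {G n m}.
Arguments fig_g {G n m}.

Lemma fig_comp_inj {G : groupType} {n m p} (x : FIGhom G m p) (y : FIGhom G n m) :
  injectiveb [ffun i => fig_f x (fig_f y i)].
Proof.
apply/injectiveP => i j; rewrite !ffunE => /(injectiveP _ (fig_inj x)).
exact: (injectiveP _ (fig_inj y)).
Qed.

Definition fig_comp {G : groupType} {n m p} (x : FIGhom G m p) (y : FIGhom G n m)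
  : FIGhom G n p :=
  @FIGHom G n p [ffun i => fig_f x (fig_f y i)] (fig_comp_inj x y)
    [ffun i => (fig_g y i * fig_g x (fig_f y i))%g].

Lemma fig_id_inj n : injectiveb [ffun i : 'I_n => i].
Proof. by apply/injectiveP => i j; rewrite !ffunE. Qed.

Definition fig_id (G : groupType) n : FIGhom G n n :=
  @FIGHom G n n [ffun i => i] (fig_id_inj n) [ffun _ => 1%g].

(* G_n = S_n wr G = Aut_{FI_G}([n]) : every endomorphism of [n] in FI_G is an
   automorphism (an injective self-map of a finite set is bijective, and
   (f,g) has inverse (f^-1, x |-> g(f^-1 x)^-1)), so the elements of G_n are
   exactly the elements of FIGhom G n n, with the FI_G composition. *)

Record FIGmod (k : comPzRingType) (G : groupType) := FIGMod {
  figV :> nat -> lmodType k;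
  figact : forall n m, FIGhom G n m -> figV n -> figV m;
  figact_lin : forall n m (x : FIGhom G n m), linear (figact n m x);
  figact_id : forall n (v : figV n), figact n n (fig_id G n) v = v;
  figact_comp : forall n m p (x : FIGhom G m p) (y : FIGhom G n m) (v : figV n),
      figact n p (fig_comp x y) v = figact m p x (figact n m y v)
}.
Arguments figV {k G}.
Arguments figact {k G} _ {n m}.

Record FIGmor (k : comPzRingType) (G : groupType) (V W : FIGmod k G) := FIGMor {
  figmor :> forall n, V n -> W n;
  figmor_lin : forall n : nat, linear (figmor n);
  figmor_nat : forall n m (x : FIGhom G n m) (v : V n),
      figmor m (figact V x v) = figact W x (figmor n v)
}.
Arguments FIGmor {k G}.
Arguments figmor {k G V W}.

(* projective object of the abelian category of all FI_G-modules: morphisms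
   from V lift along every epimorphism (= degreewise surjective morphism). *)
Definition FIG_projective {k : comPzRingType} {G : groupType} (V : FIGmod k G)
  : Prop :=
  forall (U W : FIGmod k G) (p : FIGmor U W) (f : FIGmor V W),
    (forall n (w : W n), exists u : U n, p n u = w) ->
    exists h : FIGmor V U, forall n (v : V n), p n (h n v) = f n v.

Record GnMod (k : comPzRingType) (G : groupType) (n : nat) := GnModule {
  gnW :> lmodType k;
  gnact : FIGhom G n n -> gnW -> gnW;
  gnact_lin : forall s, linear (gnact s);
  gnact_id : forall w, gnact (fig_id G n) w = w;
  gnact_comp : forall s t w, gnact (fig_comp s t) w = gnact s (gnact t w)
}.
Arguments gnW {k G n}.
Arguments gnact {k G n}.

Definition Gn_hom {k : comPzRingType} {G : groupType} {n : nat}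
  {A B : GnMod k G n} (h : A -> B) : Prop :=
  linear h /\ forall s a, h (gnact A s a) = gnact B s (h a).

Definition Gn_projective {k : comPzRingType} {G : groupType} {n : nat}
  (P : GnMod k G n) : Prop :=
  forall (A B : GnMod k G n) (p : A -> B) (f : P -> B),
    Gn_hom p -> Gn_hom f -> (forall b, exists a, p a = b) ->
    exists h : P -> A, Gn_hom h /\ forall x, p (h x) = f x.

(* V ~= (+)_{i >= 0} M(W_i),  M(W)_m = W (x)_{k[G_i]} k[Hom([i],[m])].        *)
(* Tensor products and infinite direct sums of modules are not available in  *)
(* MathComp; the isomorphism V ~= (+)_i M(W_i) is expressed through the      *)
(* universal properties of (+) and (x):  there are maps                      *)
(*   beta i m : Hom([i],[m]) -> W_i -> V_m   ("x (x) w |-> image of w (x) x")  *)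
(* which are k-linear in w, G_i-balanced, compatible with the FI_G-action    *)
(* (morphisms act on M(W_i) by postcomposition on the Hom factor), and such  *)
(* that for each m, V_m together with (beta i m)_i is the direct sum over i  *)
(* of the tensor products W_i (x)_{k[G_i]} k[Hom([i],[m])]: every family of  *)
(* balanced maps Hom([i],[m]) x W_i -> T, k-linear in W_i, factors uniquely  *)
(* through a k-linear map V_m -> T.                                          *)
(* Balancedness convention: W_i is a left k[G_i]-module and G_i acts on      *)
(* Hom([i],[m]) on the right by precomposition, so the tensor relation is    *)
(*   (x o s) (x) w = x (x) (s . w).                                          *)

Definition balanced_family {k : comPzRingType} {G : groupType}
  {W : forall i, GnMod k G i} {m : nat} {T : lmodType k}
  (gamma : forall i, FIGhom G i m -> W i -> T) : Prop :=
  (forall i (x : FIGhom G i m), linear (gamma i x)) /\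
  (forall i (x : FIGhom G i m) (s : FIGhom G i i) (w : W i),
      gamma i (fig_comp x s) w = gamma i x (gnact (W i) s w)).

Definition is_sum_of_M {k : comPzRingType} {G : groupType} (V : FIGmod k G)
  (W : forall i, GnMod k G i) : Prop :=
  exists beta : forall i m, FIGhom G i m -> W i -> V m,
    (forall m, balanced_family (fun i => beta i m)) /\
    (forall i m p (h : FIGhom G m p) (x : FIGhom G i m) (w : W i),
        figact V h (beta i m x w) = beta i p (fig_comp h x) w) /\
    (forall m (T : lmodType k) (gamma : forall i, FIGhom G i m -> W i -> T),
        balanced_family gamma ->
        exists u : V m -> T,
          [/\ linear u,
              (forall i x w, u (beta i m x w) = gamma i x w) &
              (forall u' : V m -> T, linear u' ->
                 (forall i x w, u' (beta i m x w) = gamma i x w) ->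
                 forall v, u' v = u v)]).

Definition FIG_rel_projective {k : comPzRingType} {G : groupType}
  (V : FIGmod k G) : Prop :=
  exists W : forall i, GnMod k G i, is_sum_of_M V W.

(* Main.v *)
Require Import Defs.
From HB Require Import structures.
From mathcomp Require Import all_boot all_algebra.
From mathcomp Require Import boolp.
From Stdlib Require Import ClassicalEpsilon.

Set Implicit Arguments.
Unset Strict Implicit.
Unset Printing Implicit Defensive.
Import GRing.Theory.
Local Open Scope ring_scope.

Record qdata (k : pzRingType) := QData {
  qX : Type; qR : qX -> qX -> Prop;
  qz0 : qX; qadd0 : qX -> qX -> qX; qopp0 : qX -> qX; qscl0 : k -> qX -> qX;
  Rrefl : forall x, qR x x; Rsym : forall x y, qR x y -> qR y x;
  Rtrans : forall x y w, qR x y -> qR y w -> qR x w;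
  Radd : forall x x' y y', qR x x' -> qR y y' -> qR (qadd0 x y) (qadd0 x' y');
  Ropp : forall x x', qR x x' -> qR (qopp0 x) (qopp0 x');
  Rscl : forall a x x', qR x x' -> qR (qscl0 a x) (qscl0 a x');
  RaddA : forall x y w, qR (qadd0 x (qadd0 y w)) (qadd0 (qadd0 x y) w);
  RaddC : forall x y, qR (qadd0 x y) (qadd0 y x);
  Radd0 : forall x, qR (qadd0 qz0 x) x;
  RaddN : forall x, qR (qadd0 (qopp0 x) x) qz0;
  RsclA : forall a b x, qR (qscl0 a (qscl0 b x)) (qscl0 (a * b) x);
  Rscl1 : forall x, qR (qscl0 1 x) x;
  RsclDr : forall a x y, qR (qscl0 a (qadd0 x y)) (qadd0 (qscl0 a x) (qscl0 a y));
  RsclDl : forall a b x, qR (qscl0 (a + b) x) (qadd0 (qscl0 a x) (qscl0 b x)) }.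

Section Quot.
Variables (k : pzRingType) (d : qdata k).
Local Notation X := (qX d).
Local Notation R := (@qR k d).
Local Notation z := (qz0 d).
Local Notation add := (@qadd0 k d).
Local Notation opp := (@qopp0 k d).
Local Notation scl := (@qscl0 k d).
Let Rrefl := @Rrefl k d. Let Rsym := @Rsym k d. Let Rtrans := @Rtrans k d.
Let Radd := @Radd k d. Let Ropp := @Ropp k d. Let Rscl := @Rscl k d.

Record Q : Type := MkQ { qset : X -> Prop; qsetP : exists x, qset = R x }.
Definition qpi x := MkQ (ex_intro (fun y => R x = R y) x erefl).
Definition qrepr (q : Q) : X :=
  proj1_sig (constructive_indefinite_description _ (qsetP q)).

Lemma Q_eq (q1 q2 : Q) : qset q1 = qset q2 -> q1 = q2.
Proof.
case: q1 q2 => [s1 p1] [s2 p2] /= e; subst s2.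
by rewrite (Prop_irrelevance p1 p2).
Qed.

Lemma qreprK q : qpi (qrepr q) = q.
Proof.
apply: Q_eq; rewrite /qrepr /=.
by case: (constructive_indefinite_description _ _) => x /= ->.
Qed.

Lemma qpiP x y : qpi x = qpi y <-> R x y.
Proof.
split=> [e|r].
  have: qset (qpi x) y by rewrite e /=; apply: Rrefl.
  by move=> /=; apply.
apply: Q_eq => /=; apply: funext => w; apply: propext; split=> h.
  exact: Rtrans (Rsym r) h.
exact: Rtrans r h.
Qed.

Lemma qreprR x : R (qrepr (qpi x)) x.
Proof. by apply/qpiP; rewrite qreprK. Qed.

Lemma Q_ind (P : Q -> Prop) : (forall x, P (qpi x)) -> forall q, P q.
Proof. by move=> h q; rewrite -(qreprK q). Qed.

Definition qz := qpi z.
Definition qadd q1 q2 := qpi (add (qrepr q1) (qrepr q2)).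
Definition qopp q := qpi (opp (qrepr q)).
Definition qscl a q := qpi (scl a (qrepr q)).

Lemma qaddE x y : qadd (qpi x) (qpi y) = qpi (add x y).
Proof. by apply/qpiP; apply: Radd; apply: qreprR. Qed.
Lemma qoppE x : qopp (qpi x) = qpi (opp x).
Proof. by apply/qpiP; apply: Ropp; apply: qreprR. Qed.
Lemma qsclE a x : qscl a (qpi x) = qpi (scl a x).
Proof. by apply/qpiP; apply: Rscl; apply: qreprR. Qed.

Lemma qaddA : associative qadd.
Proof.
elim/Q_ind=> x; elim/Q_ind=> y; elim/Q_ind=> w.
by rewrite !qaddE; apply/qpiP; apply: RaddA.
Qed.
Lemma qaddC : commutative qadd.
Proof. by elim/Q_ind=> x; elim/Q_ind=> y; rewrite !qaddE; apply/qpiP; apply: RaddC. Qed.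
Lemma qadd0r : left_id qz qadd.
Proof. by elim/Q_ind=> x; rewrite /qz qaddE; apply/qpiP; apply: Radd0. Qed.
Lemma qaddN : left_inverse qz qopp qadd.
Proof. by elim/Q_ind=> x; rewrite qoppE qaddE; apply/qpiP; apply: RaddN. Qed.

HB.instance Definition _ := gen_eqMixin Q.
HB.instance Definition _ := gen_choiceMixin Q.
HB.instance Definition _ := GRing.isZmodule.Build Q qaddA qaddC qadd0r qaddN.

Lemma qpiD x y : qpi (add x y) = qpi x + qpi y.
Proof. by rewrite -qaddE. Qed.
Lemma qpiN x : qpi (opp x) = - qpi x.
Proof. by rewrite -qoppE. Qed.

Lemma qsclA a b v : qscl a (qscl b v) = qscl (a * b) v.
Proof. by elim/Q_ind: v => x; rewrite !qsclE; apply/qpiP; apply: RsclA. Qed.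
Lemma qscl1 : left_id 1 qscl.
Proof. by elim/Q_ind=> x; rewrite !qsclE; apply/qpiP; apply: Rscl1. Qed.
Lemma qsclDr : right_distributive qscl +%R.
Proof.
move=> a; elim/Q_ind=> x; elim/Q_ind=> y.
by rewrite -qpiD !qsclE -qpiD; apply/qpiP; apply: RsclDr.
Qed.
Lemma qsclDl v : {morph qscl^~ v : a b / a + b}.
Proof.
by elim/Q_ind: v => x a b; rewrite !qsclE -qpiD; apply/qpiP; apply: RsclDl.
Qed.

HB.instance Definition _ := GRing.Zmodule_isLmodule.Build k Q qsclA qscl1 qsclDr qsclDl.

Lemma qpiZ a x : qpi (scl a x) = a *: qpi x.
Proof. by rewrite -qsclE. Qed.
Lemma qpi0 : qpi z = 0.
Proof. by []. Qed.

End Quot.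

Section Lin.
Variables (k : pzRingType) (U W : lmodType k) (f : U -> W).
Hypothesis lf : linear f.
Lemma linD u v : f (u + v) = f u + f v.
Proof. by have := lf 1 u v; rewrite !scale1r. Qed.
Lemma lin0 : f 0 = 0.
Proof. by apply/eqP; rewrite -(addrI (f 0) (_ : f 0 + f 0 = f 0 + 0)) // -linD !addr0. Qed.
Lemma linN u : f (- u) = - f u.
Proof. by apply/eqP; rewrite -addr_eq0 -linD addNr lin0. Qed.
Lemma linB u v : f (u - v) = f u - f v.
Proof. by rewrite linD linN. Qed.
Lemma linZ a u : f (a *: u) = a *: f u.
Proof. by have := lf a u 0; rewrite !addr0 lin0 addr0. Qed.
Lemma lin_sum I (r : seq I) (P : pred I) (F : I -> U) :
  f (\sum_(i <- r | P i) F i) = \sum_(i <- r | P i) f (F i).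
Proof. exact: (big_morph f linD lin0). Qed.
End Lin.

Lemma linear_of (k : pzRingType) (U W : lmodType k) (f : U -> W) :
  (forall u v, f (u + v) = f u + f v) -> (forall a u, f (a *: u) = a *: f u) -> linear f.
Proof. by move=> hD hZ a u v; rewrite hD hZ. Qed.

Section FIGbasics.
Variable G : groupType.

Lemma fig_eq n m (x y : FIGhom G n m) :
  fig_f x = fig_f y -> fig_g x = fig_g y -> x = y.
Proof.
case: x y => f1 i1 g1 [f2 i2 g2] /= ef eg; subst f2 g2.
by rewrite (eq_irrelevance i1 i2).
Qed.

Lemma fig_compA n m p q (x : FIGhom G p q) (y : FIGhom G m p) (w : FIGhom G n m) :
  fig_comp x (fig_comp y w) = fig_comp (fig_comp x y) w.
Proof.
apply: fig_eq => /=; apply/ffunP => i; rewrite !ffunE //=.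
by rewrite mulgA.
Qed.

Lemma fig_comp1 n m (x : FIGhom G n m) : fig_comp x (fig_id G n) = x.
Proof.
apply: fig_eq => /=; apply/ffunP => i; rewrite !ffunE //=.
by rewrite ?mulg1 ?mul1g ?ffunE.
Qed.

Lemma fig_1comp n m (x : FIGhom G n m) : fig_comp (fig_id G m) x = x.
Proof.
apply: fig_eq => /=; apply/ffunP => i; rewrite !ffunE //=.
by rewrite ?mulg1 ?mul1g ?ffunE.
Qed.

Lemma fig_le n m (x : FIGhom G n m) : (n <= m)%N.
Proof.
have := leq_card (fig_f x) (injectiveP _ (fig_inj x)).
by rewrite !card_ord.
Qed.
End FIGbasics.

Record trip (G : groupType) (F : nat -> Type) (m : nat) := Trip
  { ti : nat; tx : FIGhom G ti m; tw : F ti }.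

Section MainA.
Variables (k : comPzRingType) (G : groupType) (V : FIGmod k G).

Local Notation act := (figact V).
Let actlin n m (x : FIGhom G n m) : linear (act x) := @figact_lin _ _ V n m x.
Lemma act_id n (v : V n) : act (fig_id G n) v = v.
Proof. exact: figact_id. Qed.
Lemma act_comp n m p (x : FIGhom G m p) (y : FIGhom G n m) v :
  act (fig_comp x y) v = act x (act y v).
Proof. exact: figact_comp. Qed.
Lemma actD n m (x : FIGhom G n m) u v : act x (u + v) = act x u + act x v.
Proof. exact (linD (actlin x) u v). Qed.
Lemma actZ n m (x : FIGhom G n m) a u : act x (a *: u) = a *: act x u.
Proof. exact (linZ (actlin x) a u). Qed.
Lemma actN n m (x : FIGhom G n m) u : act x (- u) = - act x u.
Proof. exact (linN (actlin x) u). Qed.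
Lemma actB n m (x : FIGhom G n m) u v : act x (u - v) = act x u - act x v.
Proof. exact (linB (actlin x) u v). Qed.
Lemma act0 n m (x : FIGhom G n m) : act x 0 = 0.
Proof. exact (lin0 (actlin x)). Qed.
Lemma act_sum n m (x : FIGhom G n m) I (r : seq I) (F : I -> V n) :
  act x (\sum_(i <- r) F i) = \sum_(i <- r) act x (F i).
Proof. exact (lin_sum (actlin x) r predT F). Qed.

Definition VF := fun i => (V i : Type).
Definition evV j (s : seq (trip G VF j)) : V j := \sum_(t <- s) act (tx t) (tw t).

Definition Lpred j (v : V j) : Prop :=
  exists s : seq (trip G VF j), all (fun t => ti t < j)%N s /\ v = evV s.

Arguments Lpred : clear implicits.

Lemma Lpred0 j : Lpred j 0.
Proof. by exists [::]; rewrite /evV big_nil. Qed.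
Lemma LpredD j u v : Lpred j u -> Lpred j v -> Lpred j (u + v).
Proof.
move=> [s [hs ->]] [t [ht ->]]; exists (s ++ t); split.
  by rewrite all_cat hs ht.
by rewrite /evV big_cat.
Qed.
Lemma LpredZ j a v : Lpred j v -> Lpred j (a *: v).
Proof.
move=> [s [hs ->]]; exists (map (fun t => @Trip G VF j (ti t) (tx t) (a *: (tw t : V (ti t)))) s); split.
  by rewrite all_map.
rewrite /evV big_map scaler_sumr; apply: eq_bigr => t _ /=; by rewrite actZ.
Qed.
Lemma LpredN j v : Lpred j v -> Lpred j (- v).
Proof. by move=> h; rewrite -scaleN1r; apply: LpredZ. Qed.
Lemma LpredB j u v : Lpred j u -> Lpred j v -> Lpred j (u - v).
Proof. by move=> hu hv; apply: LpredD => //; apply: LpredN. Qed.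
Lemma Lpred_img i j (y : FIGhom G i j) v : (i < j)%N -> Lpred j (act y v).
Proof.
move=> lij; exists [:: Trip y v]; split; first by rewrite /= lij.
by rewrite /evV big_seq1.
Qed.
Lemma Lpred_act j m (y : FIGhom G j m) v : Lpred j v -> Lpred m (act y v).
Proof.
move=> [s [hs ->]]; exists (map (fun t => Trip (fig_comp y (tx t)) (tw t)) s); split.
  rewrite all_map; apply: sub_all hs => t /= h.
  by apply: leq_trans h _; apply: fig_le y.
rewrite /evV act_sum big_map; apply: eq_bigr => t _ /=; by rewrite act_comp.
Qed.

Definition hR j (u v : V j) := Lpred j (u - v).

Lemma hR_eq j (u v : V j) : u = v -> hR u v.
Proof. by move=> ->; rewrite /hR subrr; apply: Lpred0. Qed.

Definition hdata (j : nat) : qdata k.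
refine (@QData k (V j) (@hR j) 0 +%R (fun x => - x) *:%R _ _ _ _ _ _ _ _ _ _ _ _ _ _).
- by move=> x; apply: hR_eq.
- by move=> x y h; rewrite /hR -opprB; apply: LpredN.
- by move=> x y w h1 h2; rewrite /hR -(subrKA y); apply: LpredD.
- by move=> x x' y y' h1 h2; rewrite /hR opprD addrACA; apply: LpredD.
- by move=> x x' h; rewrite /hR -opprD; apply: LpredN.
- by move=> a x x' h; rewrite /hR -scalerBr; apply: LpredZ.
- by move=> *; apply: hR_eq; rewrite addrA.
- by move=> *; apply: hR_eq; rewrite addrC.
- by move=> *; apply: hR_eq; rewrite add0r.
- by move=> *; apply: hR_eq; rewrite addNr.
- by move=> *; apply: hR_eq; rewrite scalerA.
- by move=> *; apply: hR_eq; rewrite scale1r.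
- by move=> *; apply: hR_eq; rewrite scalerDr.
- by move=> *; apply: hR_eq; rewrite scalerDl.
Defined.

Definition HV j : lmodType k := Q (hdata j).
Definition hpi j (v : V j) : HV j := @qpi _ (hdata j) v.
Definition hrep j (c : HV j) : V j := @qrepr _ (hdata j) c.

Lemma hpiP j (u v : V j) : hpi u = hpi v <-> Lpred j (u - v).
Proof. exact: (@qpiP _ (hdata j)). Qed.
Lemma hrepK j (c : HV j) : hpi (hrep c) = c.
Proof. exact: (@qreprK _ (hdata j)). Qed.
Lemma hpiD j (u v : V j) : hpi (u + v) = hpi u + hpi v.
Proof. exact: (@qpiD _ (hdata j)). Qed.
Lemma hpiZ j a (v : V j) : hpi (a *: v) = a *: hpi v.
Proof. exact: (@qpiZ _ (hdata j)). Qed.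
Lemma hpi0 j : hpi (0 : V j) = 0.
Proof. by []. Qed.
Lemma H_ind j (P : HV j -> Prop) : (forall v, P (hpi v)) -> forall c, P c.
Proof. exact: (@Q_ind _ (hdata j)). Qed.
Lemma hpi_L j (v : V j) : Lpred j v -> hpi v = 0.
Proof. by move=> h; rewrite -(hpi0 j); apply/hpiP; rewrite subr0. Qed.

Definition hact j (s : FIGhom G j j) (c : HV j) : HV j := hpi (act s (hrep c)).
Lemma hactE j (s : FIGhom G j j) v : hact s (hpi v) = hpi (act s v).
Proof.
apply/hpiP; rewrite -actB; apply: Lpred_act; apply/hpiP; exact: hrepK.
Qed.

Definition HG (j : nat) : GnMod k G j.
refine (@GnModule k G j (HV j) (@hact j) _ _ _).
- move=> s a; elim/H_ind=> u; elim/H_ind=> v.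
  by rewrite -hpiZ -hpiD !hactE actD actZ hpiD hpiZ.
- by elim/H_ind=> v; rewrite hactE act_id.
- by move=> s t; elim/H_ind=> v; rewrite !hactE act_comp.
Defined.

End MainA.

Lemma ord_b (b : bool) (i : 'I_b) : b.
Proof. by case: b i => // -[]. Qed.

Lemma ordb_eq (b : bool) (i i' : 'I_b) : i = i'.
Proof. by apply: val_inj; case: b i i' => [] [[|?] ?] [[|?] ?]. Qed.

Lemma sum_ordb (M : nmodType) (b : bool) (i0 : 'I_b) (F : 'I_b -> M) :
  \sum_(i : 'I_b) F i = F i0.
Proof.
rewrite (bigD1 i0) //= big1 ?addr0 // => i ne; exfalso; move/negP: ne; apply.
by rewrite (ordb_eq i i0).
Qed.

Lemma sum_ordF (M : nmodType) (b : bool) (F : 'I_b -> M) :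
  ~~ b -> \sum_(i : 'I_b) F i = 0.
Proof. by move=> nb; rewrite big1 // => i _; move: (ord_b i); rewrite (negbTE nb). Qed.

Section Inf.
Variables (k : comPzRingType) (G : groupType) (j : nat).

Definition conv n m (x : FIGhom G n m) : FIGhom G j j :=
  match n =P j, m =P j with
  | ReflectT en, ReflectT em =>
      eq_rect m (fun m' => FIGhom G j m') (eq_rect n (fun n' => FIGhom G n' m) x j en) j em
  | _, _ => fig_id G j
  end.

Lemma conv_id (x : FIGhom G j j) : conv x = x.
Proof.
rewrite /conv; case: (j =P j) => [e|//].
by rewrite (eq_irrelevance e erefl).
Qed.

Definition oj : 'I_(j == j) := @Ordinal (j == j) 0 ltac:(by rewrite eqxx).

Variable A : GnMod k G j.
Let glin s : linear (gnact A s) := @gnact_lin _ _ _ A s.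
Lemma gD s u v : gnact A s (u + v) = gnact A s u + gnact A s v.
Proof. exact (linD (glin s) u v). Qed.
Lemma gZ s a u : gnact A s (a *: u) = a *: gnact A s u.
Proof. exact (linZ (glin s) a u). Qed.
Lemma g0 s : gnact A s 0 = 0.
Proof. exact (lin0 (glin s)). Qed.
Lemma g_sum s I (r : seq I) (F : I -> A) :
  gnact A s (\sum_(i <- r) F i) = \sum_(i <- r) gnact A s (F i).
Proof. exact (lin_sum (glin s) r predT F). Qed.
Lemma g_id u : gnact A (fig_id G j) u = u.
Proof. exact: gnact_id. Qed.
Lemma g_comp s t u : gnact A (fig_comp s t) u = gnact A s (gnact A t u).
Proof. exact: gnact_comp. Qed.

Definition InfV (m : nat) : lmodType k := {ffun 'I_(m == j) -> (A : lmodType k)}.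
Definition infact n m (x : FIGhom G n m) (phi : InfV n) : InfV m :=
  [ffun _ => \sum_(i : 'I_(n == j)) gnact A (conv x) (phi i)].

Lemma infact_lin n m (x : FIGhom G n m) : linear (infact x).
Proof.
move=> a u v; apply/ffunP => i; rewrite !ffunE scaler_sumr -big_split /=.
by apply: eq_bigr => i' _; rewrite !ffunE gD gZ.
Qed.

Lemma infact_id n (phi : InfV n) : infact (fig_id G n) phi = phi.
Proof.
apply/ffunP => i; rewrite ffunE.
have nj := ord_b i; move/eqP: nj => nj; subst n.
by rewrite (sum_ordb i) conv_id g_id.
Qed.

Lemma infact_comp n m p (x : FIGhom G m p) (y : FIGhom G n m) (phi : InfV n) :
  infact (fig_comp x y) phi = infact x (infact y phi).
Proof.
apply/ffunP => i; rewrite !ffunE.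
have /eqP pj := ord_b i; subst p.
have [nj|nj] : n = j \/ n <> j by case: (n =P j); [left|right].
2:{ have nj' : ~~ (n == j) by apply/eqP.
  rewrite sum_ordF // big1 // => i' _; rewrite ffunE sum_ordF //.
  exact: g0. }
subst n; have mj : m = j.
  by apply/eqP; rewrite eqn_leq (fig_le x) (fig_le y).
subst m.
rewrite !(sum_ordb i) ffunE (sum_ordb i) !conv_id.
by rewrite g_comp.
Qed.

Definition Inf : FIGmod k G :=
  @FIGMod k G InfV infact infact_lin infact_id infact_comp.

Lemma infactE n m (x : FIGhom G n m) (phi : InfV n) :
  figact Inf x phi = infact x phi.
Proof. by []. Qed.

End Inf.

Arguments oj {j}.

Definition Gn_hom' (k : comPzRingType) (G : groupType) (j : nat)
  (A B : GnMod k G j) (p : A -> B) := Gn_hom p.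

Section InfMor.
Variables (k : comPzRingType) (G : groupType) (j : nat).

Definition infmap (A B : GnMod k G j) (p : A -> B) (m : nat) (phi : InfV A m) : InfV B m :=
  [ffun i => p (phi i)].

Lemma infmap_mor (A B : GnMod k G j) (p : A -> B) : Gn_hom p ->
  { P : FIGmor (Inf A) (Inf B) | forall m phi, P m phi = infmap p phi }.
Proof.
move=> [pl pe].
have l1 m : linear (@infmap A B p m).
  move=> a u v; apply/ffunP => i; rewrite !ffunE.
  by rewrite (linD pl) (linZ pl).
have n1 n m (x : FIGhom G n m) (phi : InfV A n) :
    infmap p (figact (Inf A) x phi) = figact (Inf B) x (infmap p phi).
  apply/ffunP => i; rewrite !ffunE (lin_sum pl); apply: eq_bigr => i' _.
  by rewrite ffunE pe.
by exists (@FIGMor k G (Inf A) (Inf B) (fun m => @infmap A B p m) l1 n1).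
Qed.

Lemma infmap_surj (A B : GnMod k G j) (p : A -> B) :
  (forall b, exists a, p a = b) -> forall m (w : InfV B m), exists u, infmap p u = w.
Proof.
move=> hs m w.
exists [ffun i => proj1_sig (cid (hs (w i)))].
by apply/ffunP => i; rewrite !ffunE; case: (cid _).
Qed.
End InfMor.

Section VInf.
Variables (k : comPzRingType) (G : groupType) (V : FIGmod k G) (j : nat).
Local Notation act := (figact V).

Definition tr m (v : V m) : V j :=
  match m =P j with
  | ReflectT e => eq_rect m (fun m' => (V m' : Type)) v j e
  | ReflectF _ => 0
  end.

Lemma tr_id (v : V j) : tr v = v.
Proof. by rewrite /tr; case: (j =P j) => [e|//]; rewrite (eq_irrelevance e erefl). Qed.

Definition VG : GnMod k G j :=
  @GnModule k G j (V j) (@figact k G V j j) (@figact_lin k G V j j)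
     (@figact_id k G V j) (@figact_comp k G V j j j).

Lemma mor_nat (W : FIGmod k G) (h : FIGmor V W) n m (x : FIGhom G n m) (v : V n) :
  h m (act x v) = figact W x (h n v).
Proof. exact: figmor_nat. Qed.

Lemma inf_mor (A : GnMod k G j) (g : V j -> A) :
  linear g -> (forall s v, g (act s v) = gnact A s (g v)) ->
  (forall i (y : FIGhom G i j) v, (i < j)%N -> g (act y v) = 0) ->
  { P : FIGmor V (Inf A) | forall m v, P m v = [ffun _ => g (tr v)] }.
Proof.
move=> hl he hk.
pose P m (v : V m) : InfV A m := [ffun _ => g (tr v)].
have l1 m : linear (@P m).
  move=> a u v; apply/ffunP => i; rewrite !ffunE.
  have /eqP mj := ord_b i; subst m.
  by rewrite !tr_id (linD hl) (linZ hl).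
have n1 n m (x : FIGhom G n m) (v : V n) : P m (act x v) = figact (Inf A) x (P n v).
  apply/ffunP => i; rewrite infactE !ffunE.
  have /eqP mj := ord_b i; subst m.
  have [nj|nj] : n = j \/ n <> j by case: (n =P j); [left|right].
    subst n; rewrite (sum_ordb i) ffunE !tr_id conv_id; exact: he.
  have nj' : ~~ (n == j) by apply/eqP.
  rewrite sum_ordF // tr_id; apply: hk.
  by rewrite ltn_neqAle (fig_le x) andbT; apply/eqP.
by exists (@FIGMor k G V (Inf A) P l1 n1).
Qed.

Section MorInf.
Variables (A : GnMod k G j) (h : FIGmor V (Inf A)).
Definition gof (v : V j) : A := h j v oj.

Lemma gof_lin : linear gof.
Proof.
move=> a u v; rewrite /gof.
by rewrite (linD (@figmor_lin _ _ _ _ h j)) (linZ (@figmor_lin _ _ _ _ h j)) !ffunE.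
Qed.

Lemma gof_eq s v : gof (act s v) = gnact A s (gof v).
Proof.
by rewrite /gof mor_nat infactE ffunE (sum_ordb oj) conv_id.
Qed.

Lemma gof_low i (y : FIGhom G i j) v : (i < j)%N -> gof (act y v) = 0.
Proof.
move=> lij; rewrite /gof mor_nat infactE ffunE sum_ordF //.
by apply/eqP => e; subst i; rewrite ltnn in lij.
Qed.
End MorInf.

End VInf.

Section Sigma.
Variables (k : comPzRingType) (G : groupType) (V : FIGmod k G) (j : nat).
Hypothesis HP : FIG_projective V.
Local Notation act := (figact V).

Lemma hpi_hom : @Gn_hom k G j (VG V j) (HG V j) (@hpi k G V j).
Proof.
split; first by move=> a u v; rewrite hpiD hpiZ.
by move=> s a; rewrite /= hactE.
Qed.

Lemma sigma_ex : exists sg : V j -> V j,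
  [/\ linear sg, (forall s v, sg (act s v) = act s (sg v)),
      (forall i (y : FIGhom G i j) v, (i < j)%N -> sg (act y v) = 0) &
      (forall v, hpi (sg v) = hpi v)].
Proof.
have [Pm ePm] := infmap_mor hpi_hom.
have hl : linear (@hpi k G V j) by case: hpi_hom.
have [F eF] := @inf_mor k G V j (HG V j) (@hpi k G V j) hl
   (fun s v => esym (hactE s v))
   (fun i y v lij => hpi_L (Lpred_img y v lij)).
have hs : forall n (w : Inf (HG V j) n), exists u, Pm n u = w.
  move=> n w; have [u hu] := @infmap_surj k G j (VG V j) (HG V j) (@hpi k G V j)
     (fun b => ex_intro _ (hrep b) (hrepK b)) n w.
  by exists u; rewrite ePm.
have [h hh] := @HP _ _ Pm F hs.
exists (gof h); split.
- exact (gof_lin h).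
- by move=> s v; rewrite gof_eq.
- by move=> i y v lij; rewrite (gof_low h y v lij).
- move=> v; have := hh j v; rewrite ePm eF => /ffunP /(_ oj).
  by rewrite !ffunE tr_id.
Qed.

End Sigma.

Section SigmaUse.
Variables (k : comPzRingType) (G : groupType) (V : FIGmod k G) (j : nat).
Hypothesis HP : FIG_projective V.
Local Notation act := (figact V).
Variable sg : V j -> V j.
Hypotheses (sgl : linear sg) (sge : forall s v, sg (act s v) = act s (sg v))
  (sgk : forall i (y : FIGhom G i j) v, (i < j)%N -> sg (act y v) = 0)
  (sgh : forall v, hpi (sg v) = hpi v).

Lemma sg_L v : @Lpred _ _ V j v -> sg v = 0.
Proof.
move=> [s [hs ->]]; rewrite /evV; elim: s hs => [|t s IH] /=.
  by rewrite big_nil (lin0 sgl).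
by move=> /andP[h1 h2]; rewrite big_cons (linD sgl) IH // (sgk _ _ h1) addr0.
Qed.

Lemma sg_resp u v : @Lpred _ _ V j (u - v) -> sg u = sg v.
Proof. by move=> h; apply/eqP; rewrite -subr_eq0 -(linB sgl) sg_L. Qed.

Definition sgr (c : HV V j) : V j := sg (hrep c).
Lemma sgr_pi v : sgr (hpi v) = sg v.
Proof. by apply: sg_resp; apply/hpiP; rewrite hrepK. Qed.

Lemma H_proj : Gn_projective (HG V j).
Proof.
move=> A B p f [pl pe] [fl fe] hsurj.
pose g := fun v : V j => f (hpi v).
have gl : linear g by move=> a u v; rewrite /g hpiD hpiZ (linD fl) (linZ fl).
have ge : forall s v, g (act s v) = gnact B s (g v).
  by move=> s v; rewrite /g -hactE; apply: fe.
have gk : forall i (y : FIGhom G i j) v, (i < j)%N -> g (act y v) = 0.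
  by move=> i y v lij; rewrite /g (hpi_L (Lpred_img y v lij)) (lin0 fl).
have [F eF] := @inf_mor k G V j B g gl ge gk.
have [Pm ePm] := infmap_mor (conj pl pe).
have hs : forall n (w : Inf B n), exists u, Pm n u = w.
  move=> n w; have [u hu] := @infmap_surj k G j A B p hsurj n w.
  by exists u; rewrite ePm.
have [h hh] := @HP _ _ Pm F hs.
have hgl := gof_lin h.
exists (fun c => gof h (sgr c)); split; first split.
- move=> a c1 c2; elim/H_ind: c1 => u; elim/H_ind: c2 => v.
  by rewrite -hpiZ -hpiD !sgr_pi (linD sgl) (linZ sgl) (linD hgl) (linZ hgl).
- move=> s c; elim/H_ind: c => v.
  have -> : gnact (HG V j) s (hpi v) = hpi (act s v) by exact: hactE.
  by rewrite !sgr_pi sge gof_eq.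
- elim/H_ind=> v; rewrite sgr_pi.
  have := hh j (sg v); rewrite ePm eF => /ffunP /(_ oj).
  by rewrite !ffunE tr_id /g sgh.
Qed.

End SigmaUse.

Section Xi.
Variables (k : comPzRingType) (G : groupType) (W : forall i, GnMod k G i).

Definition WF := fun i => (W i : Type).
Definition ev m (T : lmodType k) (gamma : forall i, FIGhom G i m -> W i -> T)
  (s : seq (trip G WF m)) : T := \sum_(t <- s) gamma (ti t) (tx t) (tw t).

Definition xR m (s1 s2 : seq (trip G WF m)) : Prop :=
  forall (T : lmodType k) (gamma : forall i, FIGhom G i m -> W i -> T),
    @balanced_family k G W m T gamma -> ev gamma s1 = ev gamma s2.

Definition xopp m (s : seq (trip G WF m)) : seq (trip G WF m) :=
  map (fun t => @Trip G WF m (ti t) (tx t) (- (tw t : W (ti t)))) s.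
Definition xscl m (a : k) (s : seq (trip G WF m)) : seq (trip G WF m) :=
  map (fun t => @Trip G WF m (ti t) (tx t) (a *: (tw t : W (ti t)))) s.

Section EvLemmas.
Variables (m : nat) (T : lmodType k) (gamma : forall i, FIGhom G i m -> W i -> T).
Hypothesis hg : @balanced_family k G W m T gamma.
Lemma evC s1 s2 : ev gamma (s1 ++ s2) = ev gamma s1 + ev gamma s2.
Proof. by rewrite /ev big_cat. Qed.
Lemma ev_nil : ev gamma [::] = 0.
Proof. by rewrite /ev big_nil. Qed.
Lemma evN s : ev gamma (xopp s) = - ev gamma s.
Proof.
rewrite /ev big_map -sumrN; apply: eq_bigr => t _ /=.
exact (linN (hg.1 _ _) _).
Qed.
Lemma evZ a s : ev gamma (xscl a s) = a *: ev gamma s.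
Proof.
rewrite /ev big_map scaler_sumr; apply: eq_bigr => t _ /=.
exact (linZ (hg.1 _ _) _ _).
Qed.
End EvLemmas.

Definition xidata (m : nat) : qdata k.
refine (@QData k (seq (trip G WF m)) (@xR m) [::] cat (@xopp m) (@xscl m)
  _ _ _ _ _ _ _ _ _ _ _ _ _ _).
- by [].
- by move=> x y h T g hg; rewrite (h T g hg).
- by move=> x y w h1 h2 T g hg; rewrite (h1 T g hg) (h2 T g hg).
- by move=> x x' y y' h1 h2 T g hg; rewrite !evC (h1 T g hg) (h2 T g hg).
- by move=> x x' h T g hg; rewrite !evN // (h T g hg).
- by move=> a x x' h T g hg; rewrite !evZ // (h T g hg).
- by move=> x y w T g hg; rewrite catA.
- by move=> x y T g hg; rewrite !evC addrC.
- by [].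
- by move=> x T g hg; rewrite evC evN // ev_nil addNr.
- by move=> a b x T g hg; rewrite !evZ // scalerA.
- by move=> x T g hg; rewrite evZ // scale1r.
- by move=> a x y T g hg; rewrite evZ // !evC !evZ // scalerDr.
- by move=> a b x T g hg; rewrite evC !evZ // scalerDl.
Defined.

Definition XiV (m : nat) : lmodType k := Q (xidata m).
Definition xpi m (s : seq (trip G WF m)) : XiV m := @qpi _ (xidata m) s.
Definition xrep m (q : XiV m) : seq (trip G WF m) := @qrepr _ (xidata m) q.

Lemma xpiP m (s1 s2 : seq (trip G WF m)) : xpi s1 = xpi s2 <-> xR s1 s2.
Proof. exact: (@qpiP _ (xidata m)). Qed.
Lemma xrepK m (q : XiV m) : xpi (xrep q) = q.
Proof. exact: (@qreprK _ (xidata m)). Qed.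
Lemma Xi_ind m (P : XiV m -> Prop) : (forall s, P (xpi s)) -> forall q, P q.
Proof. exact: (@Q_ind _ (xidata m)). Qed.
Lemma xpi_cat m (s1 s2 : seq (trip G WF m)) : xpi (s1 ++ s2) = xpi s1 + xpi s2.
Proof. exact: (@qpiD _ (xidata m)). Qed.
Lemma xpi_nil m : xpi [::] = 0 :> XiV m.
Proof. by []. Qed.
Lemma xpi_cons m (t : trip G WF m) s : xpi (t :: s) = xpi [:: t] + xpi s.
Proof. by rewrite -xpi_cat. Qed.

Definition gen m i (x : FIGhom G i m) (w : W i) : XiV m := xpi [:: Trip x w].

Lemma gen_lin m i (x : FIGhom G i m) : linear (gen x).
Proof.
move=> a u v; rewrite /gen -(@qpiZ _ (xidata m)) -xpi_cat; apply/xpiP => T g hg.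
rewrite /ev /= !big_cons !big_nil !addr0 /= (linZ (hg.1 i x)).
exact ((hg.1 i x) a u v).
Qed.

Lemma gen_bal m i (x : FIGhom G i m) (s : FIGhom G i i) w :
  gen (fig_comp x s) w = gen x (gnact (W i) s w).
Proof.
apply/xpiP => T g hg; rewrite /ev !big_cons !big_nil /=.
by rewrite hg.2.
Qed.

Definition xev m (T : lmodType k) (gamma : forall i, FIGhom G i m -> W i -> T)
  (q : XiV m) : T := ev gamma (xrep q).

Section XevL.
Variables (m : nat) (T : lmodType k) (gamma : forall i, FIGhom G i m -> W i -> T).
Hypothesis hg : @balanced_family k G W m T gamma.
Lemma xevE s : xev gamma (xpi s) = ev gamma s.
Proof.
rewrite /xev; have h : xR (xrep (xpi s)) s by apply/xpiP; rewrite xrepK.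
exact: h.
Qed.
Lemma xev_lin : linear (xev gamma).
Proof.
move=> a; elim/Xi_ind=> s1; elim/Xi_ind=> s2.
rewrite -(@qpiZ _ (xidata m)) -xpi_cat !xevE evC evZ //.
Qed.
Lemma xev_gen (i : nat) (x : FIGhom G i m) (w : W i) : xev gamma (gen (m:=m) x w) = @gamma i x w.
Proof. by rewrite xevE /ev big_seq1. Qed.
End XevL.

Lemma Xi_uniq m (T : lmodType k) (u1 u2 : XiV m -> T) :
  linear u1 -> linear u2 -> (forall (i : nat) (x : FIGhom G i m) (w : W i), u1 (gen x w) = u2 (gen x w)) ->
  forall q, u1 q = u2 q.
Proof.
move=> l1 l2 h; elim/Xi_ind; elim=> [|t s IH].
  by rewrite xpi_nil (lin0 l1) (lin0 l2).
by rewrite xpi_cons (linD l1) (linD l2) IH; case: t => i x w; rewrite h.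
Qed.

Definition xmap n m (y : FIGhom G n m) (s : seq (trip G WF n)) : seq (trip G WF m) :=
  map (fun t => @Trip G WF m (ti t) (fig_comp y (tx t)) (tw t)) s.

Lemma ev_map n m (y : FIGhom G n m) (T : lmodType k)
  (gamma : forall i, FIGhom G i m -> W i -> T) s :
  ev gamma (xmap y s) = ev (fun i x w => gamma i (fig_comp y x) w) s.
Proof. by rewrite /ev big_map. Qed.

Lemma bal_comp n m (y : FIGhom G n m) (T : lmodType k)
  (gamma : forall i, FIGhom G i m -> W i -> T) :
  @balanced_family k G W m T gamma ->
  @balanced_family k G W n T (fun i x w => gamma i (fig_comp y x) w).
Proof.
move=> [h1 h2]; split; first by move=> i x; apply: h1.
by move=> i x s w; rewrite fig_compA h2.
Qed.

Definition xact n m (y : FIGhom G n m) (q : XiV n) : XiV m := xpi (xmap y (xrep q)).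

Lemma xactE n m (y : FIGhom G n m) s : xact y (xpi s) = xpi (xmap y s).
Proof.
apply/xpiP => T g hg; rewrite !ev_map.
have h : xR (xrep (xpi s)) s by apply/xpiP; rewrite xrepK.
exact: h _ _ (bal_comp y hg).
Qed.

Lemma xact_lin n m (y : FIGhom G n m) : linear (xact y).
Proof.
move=> a; elim/Xi_ind=> s1; elim/Xi_ind=> s2.
rewrite -(@qpiZ _ (xidata n)) -xpi_cat !xactE /xmap map_cat xpi_cat.
rewrite -(@qpiZ _ (xidata m)); congr (xpi _ + _).
by rewrite /= /xscl -!map_comp.
Qed.

Lemma xact_id n (q : XiV n) : xact (fig_id G n) q = q.
Proof.
elim/Xi_ind: q => s; rewrite xactE /xmap; congr xpi.
rewrite -[RHS]map_id; apply: eq_map => -[i x w] /=.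
by rewrite fig_1comp.
Qed.

Lemma xact_comp n m p (x : FIGhom G m p) (y : FIGhom G n m) (q : XiV n) :
  xact (fig_comp x y) q = xact x (xact y q).
Proof.
elim/Xi_ind: q => s; rewrite !xactE /xmap -map_comp; congr xpi.
by apply: eq_map => -[i z w] /=; rewrite fig_compA.
Qed.

Definition Xi : FIGmod k G := @FIGMod k G XiV xact xact_lin xact_id xact_comp.

Lemma xact_gen n m (y : FIGhom G n m) i (x : FIGhom G i n) w :
  figact Xi y (gen x w) = gen (fig_comp y x) w.
Proof. by rewrite /= /gen xactE. Qed.

End Xi.

Section Iso.
Variables (k : comPzRingType) (G : groupType) (V : FIGmod k G).
Hypothesis HP : FIG_projective V.
Unset Implicit Arguments.
Variable sg : forall j, V j -> V j.
Hypothesis sgl : forall j, linear (sg j).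
Hypothesis sge : forall j (s : FIGhom G j j) (v : V j), sg j (figact V s v) = figact V s (sg j v).
Hypothesis sgk : forall j i (y : FIGhom G i j) (v : V i), (i < j)%N -> sg j (figact V y v) = 0.
Hypothesis sgh : forall j (v : V j), hpi (sg j v) = hpi v.
Set Implicit Arguments.
Local Notation act := (figact V).
Local Notation W := (HG V).
Local Notation X := (XiV W).

Definition sr i (c : HV V i) : V i := sg i (hrep c).
Lemma sr_pi i (v : V i) : sr (hpi v) = sg i v.
Proof. exact: (sgr_pi (sgl i) (sgk i)). Qed.
Lemma sr_lin i : linear (@sr i).
Proof.
move=> a; elim/H_ind=> u; elim/H_ind=> v.
by rewrite -hpiZ -hpiD !sr_pi (linD (sgl i)) (linZ (sgl i)).
Qed.
Lemma sr_act i (s : FIGhom G i i) c : sr (hact s c) = act s (sr c).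
Proof. by elim/H_ind: c => v; rewrite hactE !sr_pi sge. Qed.
Lemma hpi_sr i (c : HV V i) : hpi (sr c) = c.
Proof. by rewrite /sr sgh hrepK. Qed.

Definition gammaV m : forall i, FIGhom G i m -> W i -> V m :=
  fun i x c => act x (sr c).

Lemma gammaV_bal m : @balanced_family k G W m (V m) (@gammaV m).
Proof.
split.
  move=> i x a u v; rewrite /gammaV (linD (@sr_lin i)) (linZ (@sr_lin i)).
  by rewrite actD actZ.
move=> i x s c; rewrite /gammaV act_comp.
have -> : gnact (W i) s c = hact s c by [].
by rewrite sr_act.
Qed.

Definition Phi m (q : X m) : V m := xev (@gammaV m) q.
Lemma Phi_lin m : linear (@Phi m).
Proof. exact: (xev_lin (gammaV_bal m)). Qed.
Lemma Phi_gen m i (x : FIGhom G i m) c : Phi (gen x c) = act x (sr c).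
Proof. exact: (xev_gen (gammaV_bal m)). Qed.

Lemma Phi_nat n m (y : FIGhom G n m) (q : X n) :
  Phi (figact (Xi W) y q) = act y (Phi q).
Proof.
have l1 : linear (fun q => Phi (figact (Xi W) y q)).
  move=> a u v; rewrite (linD (@figact_lin _ _ (Xi W) _ _ y)).
  by rewrite (linZ (@figact_lin _ _ (Xi W) _ _ y)) (linD (@Phi_lin m)) (linZ (@Phi_lin m)).
have l2 : linear (fun q => act y (Phi q)).
  by move=> a u v; rewrite (linD (@Phi_lin n)) (linZ (@Phi_lin n)) actD actZ.
apply: (Xi_uniq l1 l2) => i x c /=.
by rewrite -[xact y (gen x c)]/(figact (Xi W) y (gen x c)) xact_gen !Phi_gen act_comp.
Qed.

Definition PhiM : FIGmor (Xi W) V := @FIGMor k G (Xi W) V Phi Phi_lin Phi_nat.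

Lemma Phi_surj m (v : V m) : exists q, Phi q = v.
Proof.
elim/ltn_ind: m v => m IH v.
have hL : @Lpred _ _ V m (v - sg m v).
  have /hpiP h := sgh m v; rewrite -opprB; exact: LpredN.
case: hL => s [hs ev_s].
have [q hq] : exists q, Phi q = evV s.
  elim: s hs {ev_s} => [|[i x w] s IHs] /=.
    by exists 0; rewrite /evV big_nil (lin0 (@Phi_lin m)).
  move=> /andP[lim /IHs [q hq]].
  have [qw hqw] := IH i lim w.
  exists (figact (Xi W) x qw + q).
  by rewrite (linD (@Phi_lin m)) Phi_nat hqw hq /evV big_cons.
exists (@gen k G W m m (fig_id G m) (hpi v) + q).
by rewrite (linD (@Phi_lin m)) Phi_gen act_id sr_pi hq -ev_s addrC subrK.
Qed.

Lemma idV_lin n : linear (fun v : V n => v). Proof. by []. Qed.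
Lemma idV_nat n m (x : FIGhom G n m) (v : V n) : act x v = act x v. Proof. by []. Qed.
Definition idV : FIGmor V V := @FIGMor k G V V (fun n v => v) idV_lin idV_nat.

Lemma psi_ex : exists psi : FIGmor V (Xi W), forall n v, Phi (psi n v) = v.
Proof. exact: (@HP (Xi W) V PhiM idV Phi_surj). Qed.

Variable psi : FIGmor V (Xi W).
Hypothesis hpsi : forall n v, Phi (psi n v) = v.

Lemma psi_lin n : linear (psi n). Proof. exact: figmor_lin. Qed.
Lemma psi_nat n m (y : FIGhom G n m) v : psi m (act y v) = figact (Xi W) y (psi n v).
Proof. exact: figmor_nat. Qed.

Lemma pP_lin m : linear (fun q : X m => psi m (Phi q)).
Proof.
by move=> a u v; rewrite (linD (@Phi_lin m)) (linZ (@Phi_lin m)) (linD (@psi_lin m)) (linZ (@psi_lin m)).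
Qed.

Lemma genid_lin m : linear (@gen k G W m m (fig_id G m)).
Proof. exact: gen_lin. Qed.

Lemma genid0 m : @gen k G W m m (fig_id G m) (0 : HV V m) = 0.
Proof. exact: (lin0 (@genid_lin m)). Qed.

Lemma D_lin m : linear (fun q : X m => q - @gen k G W m m (fig_id G m) (hpi (Phi q))).
Proof.
move=> a u v; rewrite (linD (@Phi_lin m)) (linZ (@Phi_lin m)) hpiD hpiZ.
rewrite (linD (@genid_lin m)) (linZ (@genid_lin m)).
by rewrite scalerBr opprD addrACA.
Qed.

Lemma fix_all m (q : X m) : psi m (Phi q) = q.
Proof.
elim/ltn_ind: m q => m IH.
have stepA i (x : FIGhom G i m) c : (i < m)%N -> psi m (Phi (gen x c)) = gen x c.
  move=> lim.
  have -> : gen x c = figact (Xi W) x (gen (fig_id G i) c).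
    by rewrite xact_gen fig_comp1.
  by rewrite Phi_nat psi_nat IH.
have stepA' (s : seq (trip G (WF W) m)) : all (fun t => ti t < m)%N s ->
    psi m (Phi (xpi s)) = xpi s.
  elim: s => [|[i x c] s IHs] /=.
    by rewrite xpi_nil (lin0 (@pP_lin m)).
  move=> /andP[lim hs]; rewrite xpi_cons (linD (@pP_lin m)) IHs //.
  by rewrite -[xpi [:: Trip x c]]/(gen x c) stepA.
have decomp (q : X m) : exists s : seq (trip G (WF W) m),
    all (fun t => ti t < m)%N s /\ q - @gen k G W m m (fig_id G m) (hpi (Phi q)) = xpi s.
  elim/Xi_ind: q; elim=> [|t s [s' [hs' es']]].
    exists [::]; split => //; rewrite xpi_nil (lin0 (@Phi_lin m)) hpi0.
    by rewrite genid0 subrr.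
  rewrite xpi_cons (linD (@D_lin m)) /= es'.
  case: t => i x c.
  have [lim|] := ltnP i m.
    exists (Trip x c :: s'); split; first by rewrite /= lim.
    have e0 : @gen k G W m m (fig_id G m) (hpi (act x (sr c))) = 0.
      by rewrite (hpi_L (Lpred_img x (sr c) lim)); exact: genid0.
    rewrite -[xpi [:: Trip x c]]/(gen x c) Phi_gen e0 subr0.
    by rewrite [in RHS]xpi_cons.
  move=> lmi; have ei : i = m by apply/eqP; rewrite eqn_leq (fig_le x).
  subst i; exists s'; split => //.
  rewrite -[xpi [:: Trip x c]]/(gen x c) Phi_gen.
  have -> : hpi (act x (sr c)) = hact x c by rewrite -hactE hpi_sr.
  rewrite -[hact x c]/(gnact (W m) x c) -gen_bal fig_1comp.
  by rewrite subrr add0r.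
have il : linear (fun q : X m => q) by [].
apply: (Xi_uniq (@pP_lin m) il) => i x c.
have [lim|lmi] := ltnP i m; first exact: stepA.
have ei : i = m by apply/eqP; rewrite eqn_leq (fig_le x).
subst i.
have -> : gen x c = @gen k G W m m (fig_id G m) (hact x c).
  by rewrite -[hact x c]/(gnact (W m) x c) -gen_bal fig_1comp.
set g0 := gen _ _.
pose z := g0 - psi m (Phi g0).
have Pz : Phi z = 0 by rewrite /z (linB (@Phi_lin m)) hpsi subrr.
have [s [hs es]] := decomp z.
move: es; rewrite Pz hpi0 genid0 subr0 => ez.
have : psi m (Phi z) = z by rewrite ez stepA'.
rewrite Pz (lin0 (@psi_lin m)) /z => /eqP; rewrite eq_sym subr_eq0 => /eqP.
by move=> <-.
Qed.

Lemma sum_M : is_sum_of_M V W.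
Proof.
exists (fun i m x c => act x (sr c)); split; [|split].
- exact: gammaV_bal.
- by move=> i m p h x w; rewrite act_comp.
move=> m T gamma hg.
have xl := xev_lin hg.
exists (fun v => xev gamma (psi m v)); split.
- move=> a u v; rewrite (linD (@psi_lin m)) (linZ (@psi_lin m)).
  by rewrite (linD xl) (linZ xl).
- by move=> i x w; rewrite -Phi_gen fix_all xev_gen.
move=> u' ul hu' v.
rewrite -{1}(hpsi v).
have l1 : linear (fun q : X m => u' (Phi q)).
  by move=> a q1 q2; rewrite (linD (@Phi_lin m)) (linZ (@Phi_lin m)) (linD ul) (linZ ul).
apply: (Xi_uniq l1 xl) => i x c.
by rewrite Phi_gen hu' xev_gen.
Qed.

End Iso.

Section Backward.
Unset Implicit Arguments.
Variables (k : comPzRingType) (G : groupType) (V : FIGmod k G) (W : forall i, GnMod k G i).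
Hypothesis Wp : forall i, Gn_projective (W i).
Variable beta : forall i m, FIGhom G i m -> W i -> V m.
Hypothesis hbal : forall m, balanced_family (fun i => beta i m).
Hypothesis hcomp : forall i m p (h : FIGhom G m p) (x : FIGhom G i m) (w : W i),
  figact V h (beta i m x w) = beta i p (fig_comp h x) w.
Hypothesis huniv : forall m (T : lmodType k) (gamma : forall i, FIGhom G i m -> W i -> T),
  balanced_family gamma ->
  exists u : V m -> T,
    [/\ linear u, (forall i x w, u (beta i m x w) = gamma i x w) &
        (forall u' : V m -> T, linear u' ->
           (forall i x w, u' (beta i m x w) = gamma i x w) -> forall v, u' v = u v)].
Set Implicit Arguments.

Lemma uniq2 m (T : lmodType k) (gamma : forall i, FIGhom G i m -> W i -> T) :
  balanced_family gamma -> forall u1 u2 : V m -> T, linear u1 -> linear u2 ->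
  (forall i x w, u1 (beta i m x w) = gamma i x w) ->
  (forall i x w, u2 (beta i m x w) = gamma i x w) -> forall v, u1 v = u2 v.
Proof.
move=> hg u1 u2 l1 l2 h1 h2 v.
have [u [_ _ hu]] := huniv m T gamma hg.
by rewrite (hu u1 l1 h1) (hu u2 l2 h2).
Qed.

Lemma beta_id i (x : FIGhom G i i) w : beta i i x w = figact V x (beta i i (fig_id G i) w).
Proof. by rewrite hcomp fig_comp1. Qed.

Lemma backward : FIG_projective V.
Proof.
move=> U Y p f hsurj.
have plin n : linear (p n) := @figmor_lin _ _ _ _ p n.
have flin n : linear (f n) := @figmor_lin _ _ _ _ f n.
have blin i m (x : FIGhom G i m) : linear (beta i m x) := (hbal m).1 i x.
have hch : forall i, exists h : W i -> U i, Gn_hom (A := W i) (B := VG U i) h /\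
    forall w, p i (h w) = f i (beta i i (fig_id G i) w).
  move=> i.
  have hp : Gn_hom (A := VG U i) (B := VG Y i) (p i).
    split; first exact: plin.
    move=> s a; exact (@figmor_nat _ _ _ _ p i i s a).
  have hf : Gn_hom (A := W i) (B := VG Y i) (fun w => f i (beta i i (fig_id G i) w)).
    split.
      by move=> a u v; rewrite (blin i i) (flin i) -(linZ (flin i)) -(linZ (blin i i _)).
    move=> s w /=.
    rewrite -(hbal i).2 fig_1comp beta_id.
    exact: figmor_nat.
  exact: (Wp i _ _ _ _ hp hf (hsurj i)).
pose h i := proj1_sig (cid (hch i)).
have hh i : Gn_hom (A := W i) (B := VG U i) (h i) /\
    forall w, p i (h i w) = f i (beta i i (fig_id G i) w).
  exact: (proj2_sig (cid (hch i))).
have hlin i : linear (h i) by case: (hh i) => [[]].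
have heq i s w : h i (gnact (W i) s w) = figact U s (h i w).
  by case: (hh i) => [[_ e] _]; apply: e.
pose gam m : forall i, FIGhom G i m -> W i -> U m := fun i x w => figact U x (h i w).
have gbal m : balanced_family (gam m).
  split.
    move=> i x a u v; rewrite /gam (hlin i).
    exact: (@figact_lin _ _ U _ _ x).
  by move=> i x s w; rewrite /gam heq figact_comp.
have hu : forall m, exists u : V m -> U m,
    [/\ linear u, (forall i x w, u (beta i m x w) = gam m i x w) &
        (forall u' : V m -> U m, linear u' ->
           (forall i x w, u' (beta i m x w) = gam m i x w) -> forall v, u' v = u v)].
  move=> m; exact: huniv m (U m) (gam m) (gbal m).
pose H m := proj1_sig (cid (hu m)).
have HP m : [/\ linear (H m), (forall i x w, H m (beta i m x w) = gam m i x w) &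
        (forall u' : V m -> U m, linear u' ->
           (forall i x w, u' (beta i m x w) = gam m i x w) -> forall v, u' v = H m v)].
  exact: (proj2_sig (cid (hu m))).
have Hlin m : linear (H m) by case: (HP m).
have Hb m i x w : H m (beta i m x w) = figact U x (h i w) by case: (HP m) => _ e _; apply: e.
have Hnat : forall n m (y : FIGhom G n m) (v : V n),
    H m (figact V y v) = figact U y (H n v).
  move=> n m y.
  pose gam' : forall i, FIGhom G i n -> W i -> U m :=
    fun i x w => figact U y (figact U x (h i w)).
  have gb : balanced_family gam'.
    split.
      move=> i x a u v; rewrite /gam' (hlin i).
      rewrite (linD (@figact_lin _ _ U _ _ x)) (linZ (@figact_lin _ _ U _ _ x)).
      exact: (@figact_lin _ _ U _ _ y).
    by move=> i x s w; rewrite /gam' heq figact_comp.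
  apply: (uniq2 gb).
  - move=> a u v; rewrite (linD (@figact_lin _ _ V _ _ y)) (linZ (@figact_lin _ _ V _ _ y)).
    exact: Hlin.
  - move=> a u v; rewrite (linD (Hlin n)) (linZ (Hlin n)).
    exact: (@figact_lin _ _ U _ _ y).
  - by move=> i x w; rewrite hcomp Hb figact_comp.
  - by move=> i x w; rewrite Hb.
exists (@FIGMor k G V U H Hlin Hnat) => m v /=.
pose gam'' : forall i, FIGhom G i m -> W i -> Y m := fun i x w => f m (beta i m x w).
have gb : balanced_family gam''.
  split; first by move=> i x a u w; rewrite /gam'' (blin i m x); exact: flin.
  by move=> i x s w; rewrite /gam'' (hbal m).2.
apply: (uniq2 gb (u1 := fun v => p m (H m v)) (u2 := f m)).
- by move=> a u w; rewrite (linD (Hlin m)) (linZ (Hlin m)); exact: plin.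
- exact: flin.
- move=> i x w; rewrite Hb /gam'' figmor_nat.
  case: (hh i) => _ ->.
  by rewrite -figmor_nat hcomp fig_comp1.
- by [].
Qed.

End Backward.

Theorem mainTheorem18 (k : comPzRingType) (G : groupType) (V : FIGmod k G) :
  (FIG_projective V <->
     exists W : forall i, GnMod k G i,
       (forall i, Gn_projective (W i)) /\ is_sum_of_M V W)
  /\ (FIG_projective V -> FIG_rel_projective V).
Proof.
have fwd : FIG_projective V -> exists W : forall i, GnMod k G i,
       (forall i, Gn_projective (W i)) /\ is_sum_of_M V W.
  move=> HP.
  pose sg j := proj1_sig (cid (sigma_ex j HP)).
  have sgP j := proj2_sig (cid (sigma_ex j HP)).
  have sgl j : linear (sg j) by case: (sgP j).
  have sge j s v : sg j (figact V s v) = figact V s (sg j v) by case: (sgP j) => _ e _ _; apply: e.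
  have sgk j i (y : FIGhom G i j) v : (i < j)%N -> sg j (figact V y v) = 0.
    by case: (sgP j) => _ _ e _; apply: e.
  have sgh j v : hpi (sg j v) = hpi v by case: (sgP j) => _ _ _ e; apply: e.
  exists (HG V); split.
    move=> i; exact: (H_proj HP (sgl i) (sge i) (sgk i) (sgh i)).
  have [psi hpsi] := psi_ex HP sgl sge sgk sgh.
  exact: (sum_M sgl sge sgk sgh hpsi).
split; last first.
  by move=> /fwd [W [_ hW]]; exists W.
split; first exact: fwd.
move=> [W [Wp [beta [hbal [hcomp huniv]]]]].
exact: (backward Wp hbal hcomp huniv).
Qed.
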